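(* Let $G$ be a torsion-free abelian group, totally ordered compatibly with addition, in which every subset that is bounded below is well-ordered. Then for any strictly increasing sequence $(g_i)_{i\in\mathbb{N}_0}$ in $G$, there exists a sequence $(n_i)_{i\in\mathbb{N}_0}$ of positive integers such that $(g_{n_{i+1}}-g_{n_i})_{i\in\mathbb{N}_0}$ is strictly increasing.
   Context: A total order $\le$ on an abelian group $G$ is compatible with addition if $b\le c$ iff $b+d\le c+d$ for all $b,c,d\in G$. A subset is bounded below if it has a lower bound in $G$, and well-ordered if each nonempty subset has a least element. *)

(* Defs.v *)
From mathcomp Require Import all_boot all_algebra.
Set Implicit Arguments. Unset Strict Implicit. Unset Printing Implicit Defensive.
Import GRing.Theory.
Local Open Scope ring_scope.

Definition total_order (G : Type) (le : G -> G -> Prop) : Prop :=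
  (forall x, le x x) /\
  (forall x y, le x y -> le y x -> x = y) /\
  (forall x y z, le x y -> le y z -> le x z) /\
  (forall x y, le x y \/ le y x).

Definition add_compatible (G : zmodType) (le : G -> G -> Prop) : Prop :=
  forall b c d : G, le b c <-> le (b + d) (c + d).

Definition torsion_free (G : zmodType) : Prop :=
  forall (n : nat) (x : G), x *+ n.+1 = 0 -> x = 0.

Definition bounded_below (G : Type) (le : G -> G -> Prop) (S : G -> Prop) : Prop :=
  exists l, forall x, S x -> le l x.

Definition well_ordered (G : Type) (le : G -> G -> Prop) (S : G -> Prop) : Prop :=
  forall T : G -> Prop, (forall x, T x -> S x) -> (exists x, T x) ->
    exists m, T m /\ forall y, T y -> le m y.

Definition lt_of (G : Type) (le : G -> G -> Prop) (x y : G) : Prop :=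
  le x y /\ x <> y.

Definition strictly_increasing (G : Type) (le : G -> G -> Prop) (u : nat -> G) : Prop :=
  forall i : nat, lt_of le (u i) (u i.+1).

(* Main.v *)
Require Import Defs.
From mathcomp Require Import all_boot all_algebra.
From Stdlib Require Import Classical ClassicalEpsilon.
Local Open Scope ring_scope.
Import GRing.Theory.

Section Aux.
Variables (G : zmodType) (le : G -> G -> Prop).
Hypotheses (Htot : total_order le) (Hcomp : add_compatible le).

Lemma lt_add (a b d : G) : lt_of le a b -> lt_of le (a + d) (b + d).
Proof.
move=> [h1 h2]; split; first exact: (proj1 (Hcomp a b d) h1).
by move=> /addIr.
Qed.

Lemma unbounded (g : nat -> G) (Hwo : forall S : G -> Prop, bounded_below le S -> well_ordered le S)
  (Hg : strictly_increasing le g) (M : G) : exists k, lt_of le M (g k).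
Proof.
have [Hrefl [Hanti [Htrans Htotal]]] := Htot.
apply: NNPP => Hn.
have Hb : forall k, le (g k) M.
  move=> k; case: (Htotal (g k) M) => // h.
  case: (classic (M = g k)) => [->|hne]; first exact: Hrefl.
  by exfalso; apply: Hn; exists k; split.
pose S := fun x => exists k, x = M - g k.
have Hbb : bounded_below le S.
  exists 0 => x [k ->].
  apply/(proj2 (Hcomp 0 (M - g k) (g k))).
  by rewrite add0r subrK; exact: Hb.
have [m [[j ->] Hm]] := Hwo S Hbb S (fun x Sx => Sx) (ex_intro _ (M - g 0%N) (ex_intro _ 0%N erefl)).
have := Hm (M - g j.+1) (ex_intro _ j.+1 erefl).
move/(proj1 (Hcomp _ _ (g j + g j.+1 - M))).
have -> : M - g j + (g j + g j.+1 - M) = g j.+1.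
  by rewrite addrA addrAC [M - g j - M]addrAC subrr add0r addKr.
have -> : M - g j.+1 + (g j + g j.+1 - M) = g j.
  by rewrite addrA addrAC [M - g j.+1 - M]addrAC subrr add0r [g j + _]addrC addKr.
move=> h; have [h1 h2] := Hg j; apply: h2; exact: Hanti.
Qed.

End Aux.

Theorem lemma4p4 (G : zmodType) (le : G -> G -> Prop)
  (Htot : total_order le) (Hcomp : add_compatible le)
  (Htf : torsion_free G)
  (Hwo : forall S : G -> Prop, bounded_below le S -> well_ordered le S)
  (g : nat -> G) (Hg : strictly_increasing le g) :
  exists n : nat -> nat, (forall i, (0 < n i)%N) /\
    strictly_increasing le (fun i => g (n i.+1) - g (n i)).
Proof.
have [Hrefl [Hanti [Htrans Htotal]]] := Htot.
have H : forall M, exists k, lt_of le M (g k.+1).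
  move=> M; have [k [h1 h2]] := @unbounded _ _ Htot Hcomp _ Hwo Hg M.
  have [h3 h4] := Hg k.
  exists k; split; first exact: Htrans h1 h3.
  move=> e; apply: h2; apply: Hanti => //; by rewrite e.
pose f := fun M => proj1_sig (constructive_indefinite_description _ (H M)).
have Hf : forall M, lt_of le M (g (f M).+1).
  by move=> M; rewrite /f; case: constructive_indefinite_description.
pose step := fun q : nat * nat => (q.2, (f (g q.2 *+ 2 - g q.1)).+1).
pose p := fun i => iter i step (1%N, 2%N).
exists (fun i => (p i).1); split.
  case=> [|i] //; rewrite /p iterS /=; case: i => // i; by rewrite iterS.
move=> i.
have E1 : (p i.+1).1 = (p i).2 by rewrite /p iterS.
have E2 : (p i.+2).1 = (f (g (p i).2 *+ 2 - g (p i).1)).+1 by rewrite /p !iterS.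
rewrite E2 E1.
set a := g (p i).1; set b := g (p i).2.
have := @lt_add _ _ Hcomp _ _ (- b) (Hf (b *+ 2 - a)).
have -> : b *+ 2 - a - b = b - a by rewrite mulr2n addrAC addrK.
by [].
Qed.
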